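(* Let $m\ge 3$. Let $X_1,\dots,X_m,Y_1,\dots,Y_m\in\mathbb{C}^n$ and $\alpha_1,\dots,\alpha_m\in\mathbb{Z}_{\ge0}^n$, and for a point $Z=(z_1,\dots,z_n)$ and $\alpha=(\alpha_{1},\dots,\alpha_{n})$ write $Z^{\alpha}=z_1^{\alpha_1}\cdots z_n^{\alpha_n}$. Let $$V_m^{(1)}=\det\big(X_i^{\alpha_j}\big)_{i,j=1}^m,\qquad V_m^{(2)}=\det\big(Y_i^{\alpha_j}\big)_{i,j=1}^m,$$ $$M=\max_{i,j}\{|X_i^{\alpha_j}|,|Y_i^{\alpha_j}|\},$$ $$B=\max_{i,j,k}\Big\{|X_i^{\alpha_j}-X_i^{\alpha_k}|,\ |X_j^{\alpha_i}-X_k^{\alpha_i}|,\ |Y_i^{\alpha_j}-Y_i^{\alpha_k}|,\ |Y_j^{\alpha_i}-Y_k^{\alpha_i}|\Big\},$$ $$\varepsilon=\max_{i,j}|X_i^{\alpha_j}-Y_i^{\alpha_j}|,$$ with all indices ranging over $1,\dots,m$. Then $$|V_m^{(1)}-V_m^{(2)}|\le m\cdot m!\,M^{m-2}B\,\varepsilon.$$ *)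

(* Defs.v *)
From HB Require Import structures.
From mathcomp Require Import all_boot all_order all_algebra.
From mathcomp Require Import complex.
From mathcomp Require Import reals.
Set Implicit Arguments. Unset Strict Implicit. Unset Printing Implicit Defensive.
Import Order.TTheory GRing.Theory Num.Theory.
Local Open Scope ring_scope.

Definition monom {C : comRingType} {n : nat} (Z : 'I_n -> C) (a : 'I_n -> nat) : C :=
  \prod_(k < n) Z k ^+ a k.

Definition gvdet {C : comRingType} {m n : nat} (X : 'I_m -> 'I_n -> C)
  (al : 'I_m -> 'I_n -> nat) : C :=
  \det (\matrix_(i < m, j < m) monom (X i) (al j)).

Definition maxM {R : realType} {m n : nat} (X Y : 'I_m -> 'I_n -> R[i])
  (al : 'I_m -> 'I_n -> nat) : R[i] :=
  \big[Num.max/0]_(i < m) \big[Num.max/0]_(j < m)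
     Num.max `|monom (X i) (al j)| `|monom (Y i) (al j)|.

Definition maxB {R : realType} {m n : nat} (X Y : 'I_m -> 'I_n -> R[i])
  (al : 'I_m -> 'I_n -> nat) : R[i] :=
  \big[Num.max/0]_(i < m) \big[Num.max/0]_(j < m) \big[Num.max/0]_(k < m)
    Num.max (Num.max `|monom (X i) (al j) - monom (X i) (al k)|
                     `|monom (X j) (al i) - monom (X k) (al i)|)
            (Num.max `|monom (Y i) (al j) - monom (Y i) (al k)|
                     `|monom (Y j) (al i) - monom (Y k) (al i)|).

Definition maxEps {R : realType} {m n : nat} (X Y : 'I_m -> 'I_n -> R[i])
  (al : 'I_m -> 'I_n -> nat) : R[i] :=
  \big[Num.max/0]_(i < m) \big[Num.max/0]_(j < m)
     `|monom (X i) (al j) - monom (Y i) (al j)|.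

(* Main.v *)
Require Import Defs.
From HB Require Import structures.
From mathcomp Require Import all_boot all_order all_algebra.
From mathcomp Require Import complex.
From mathcomp Require Import reals.
From mathcomp Require Import perm ring.
Import Order.TTheory GRing.Theory Num.Theory.
Local Open Scope ring_scope.

Section S.
Variable C : numDomainType.
Lemma max_props (x y : C): 0<=x -> 0<=y -> [/\ x <= Num.max x y, y <= Num.max x y & 0 <= Num.max x y].
Proof.
move=> hx hy; rewrite /Order.max; case: ifP => h.
  by split => //; apply: ltW.
split=> //; move: h; rewrite real_ltNge ?ger0_real //; by move/negbFE.
Qed.
Lemma bigmax_ge0 (I : finType) (F : I -> C) : (forall i, 0 <= F i) -> 0 <= \big[Num.max/0]_i F i.
Proof. move=> h; elim/big_ind: _ => //= x y hx hy; by case: (max_props _ _ hx hy). Qed.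
Lemma bigmax_ge_seq (I : eqType) (r : seq I) (F : I -> C) : (forall i, 0 <= F i) -> forall i, i \in r -> F i <= \big[Num.max/0]_(j <- r) F j.
Proof.
move=> h i; elim: r => // a r IH; rewrite in_cons big_cons.
have h2: 0 <= \big[Num.max/0]_(j <- r) F j by elim/big_ind: _ => //= x y hx hy; case: (max_props _ _ hx hy).
case: (max_props _ _ (h a) h2) => h3 h4 _.
case/orP=> [/eqP -> //|/IH]; move=> h5; exact: le_trans h5 h4.
Qed.
Lemma bigmax_ge (I : finType) (F : I -> C) : (forall i, 0 <= F i) -> forall i, F i <= \big[Num.max/0]_i F i.
Proof. move=> h i; apply: bigmax_ge_seq => //; exact: mem_index_enum. Qed.
Lemma minor_bound p (N : 'M[C]_(p.+2)) (M Bd : C) : 0 <= M ->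
 (forall i j, `|N i j| <= M) -> (forall i j k, `|N i j - N i k| <= Bd) ->
 `|\det N| <= (p.+2)`!%:R * (M ^+ p.+1 * Bd).
Proof.
move=> M0 hM hB.
pose c0 : 'I_p.+2 := ord0.
pose c1 : 'I_p.+2 := lift ord0 (ord0 : 'I_p.+1).
have c10 : c1 != c0 by [].
pose N' := \matrix_(i, j) if j == c1 then N i c1 - N i c0 else N i j.
have -> : \det N = \det N'.
  rewrite -det_tr -[\det N']det_tr.
  pose Z := \matrix_(i, j) if i == c1 then N j c0 else N j i.
  have Z0 : \det Z = 0.
    apply: (determinant_alternate c10) => j; rewrite !mxE eqxx.
    by rewrite eq_sym (negbTE c10).
  rewrite (@determinant_multilinear _ _ N'^T N^T Z c1 1 (-1)).
  - by rewrite Z0 mulr0 addr0 mul1r.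
  - by apply/rowP => j; rewrite !mxE eqxx mul1r mulN1r.
  - by apply/matrixP => i j; rewrite !mxE eq_sym (negbTE (neq_lift _ _)).
  - by apply/matrixP => i j; rewrite !mxE eq_sym (negbTE (neq_lift _ _)).
rewrite /determinant.
have := ler_norm_sum (index_enum {perm 'I_p.+2}) (fun s : 'S_(p.+2) => (-1) ^+ s * \prod_i N' i (s i)) xpredT. move=> h.
apply: (le_trans h).
apply: le_trans (_ : _ <= \sum_(s : 'S_(p.+2)) (M ^+ p.+1 * Bd)) _; last first.
  by rewrite sumr_const card_Sn mulr_natl.
apply: ler_sum => s _.
rewrite normrM normrX normrN1 expr1n mul1r normr_prod.
pose i0 := (s^-1)%g c1.
rewrite (bigD1 i0) //= mulrC.
apply: ler_pM.
- by apply: prodr_ge0 => i _; exact: normr_ge0.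
- exact: normr_ge0.
- have -> : M ^+ p.+1 = \prod_(i | i != i0) M by rewrite prodr_const cardC1 card_ord.
  apply: ler_prod => i hi; rewrite normr_ge0 /= mxE.
    have -> : (s i == c1) = false.
      by apply/negbTE; apply: contra hi => /eqP e; rewrite /i0 -e permK.
    have := hM i (s i). by [].
- have -> : s i0 = c1 by rewrite /i0; exact: permKV.
  by rewrite mxE eqxx.
Qed.
Lemma det_diff p (A B : 'M[C]_(p.+3)) (M Bd e : C) : 0 <= M ->
 (forall i j, `|A i j| <= M) -> (forall i j, `|B i j| <= M) ->
 (forall i j k, `|A i j - A i k| <= Bd) -> (forall i j k, `|B i j - B i k| <= Bd) ->
 (forall i j, `|A i j - B i j| <= e) ->
 `|\det A - \det B| <= (p.+3 * (p.+3)`!)%:R * M ^+ p.+1 * Bd * e.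
Proof.
move=> M0 hA hB hAd hBd he.
pose H (k : nat) := \matrix_(i, j) if (i < k)%N then A i j else B i j.
have HA : H p.+3 = A by apply/matrixP => i j; rewrite mxE ltn_ord.
have HB : H 0%N = B by apply/matrixP=> i j; rewrite mxE.
have step : forall k : 'I_p.+3, `|\det (H k.+1) - \det (H k)| <= (p.+3)`!%:R * M ^+ p.+1 * Bd * e.
  move=> k; rewrite (expand_det_row (H k.+1) k) (expand_det_row (H k) k) -sumrB.
  have cof : forall j, cofactor (H k.+1) k j = cofactor (H k) k j.
    move=> j; rewrite /cofactor; congr (_ * determinant _); apply/matrixP => a b; rewrite !mxE.
    have hne : (lift k a : nat) != k by rewrite eq_sym; exact: (neq_lift k a).
    by rewrite ltnS leq_eqVlt (negbTE hne).
  under eq_bigr => j _ do rewrite cof !mxE ltnSn ltnn -mulrBl.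
  apply: le_trans (ler_norm_sum _ _ _) _.
  apply: le_trans (_ : _ <= \sum_(j < p.+3) (e * ((p.+2)`!%:R * (M ^+ p.+1 * Bd)))) _; last first.
    rewrite sumr_const card_ord [(p.+3)`!]factS natrM -mulr_natl.
    by rewrite le_eqVlt; apply/orP; left; apply/eqP; ring.
  apply: ler_sum => j _; rewrite normrM; apply: ler_pM => //;
  rewrite /cofactor normrM normrX normrN1 expr1n mul1r.
  apply: minor_bound => //.
    by move=> a b; rewrite !mxE; case: ifP => _.
  by move=> a b c; rewrite !mxE; case: ifP => _.
have tel : \det A - \det B = \sum_(k < p.+3) (\det (H k.+1) - \det (H k)).
  by rewrite -(big_mkord xpredT (fun k => \det (H k.+1) - \det (H k))) telescope_sumr // HA HB.
rewrite tel.
apply: le_trans (ler_norm_sum _ _ _) _.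
apply: le_trans (_ : _ <= \sum_(k < p.+3) ((p.+3)`!%:R * M ^+ p.+1 * Bd * e)) _.
  by apply: ler_sum => k _; exact: step.
rewrite sumr_const card_ord natrM -mulr_natl.
by rewrite le_eqVlt; apply/orP; left; apply/eqP; ring.
Qed.
End S.
Arguments max_props {C}.
Arguments bigmax_ge0 {C I}.
Arguments bigmax_ge {C I}.
Arguments minor_bound {C}.
Arguments det_diff {C}.

Theorem theorem4 (R : realType) (m n : nat) (hm : (3 <= m)%N)
  (X Y : 'I_m -> 'I_n -> R[i]) (al : 'I_m -> 'I_n -> nat) :
  `|gvdet X al - gvdet Y al|
    <= (m * m`!)%:R * maxM X Y al ^+ (m - 2) * maxB X Y al * maxEps X Y al.
Proof.
case: m hm X Y al => [|[|[|p]]] // _ X Y al.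
rewrite !subSS subn0 /gvdet.
have nn : forall (a b : R[i]), 0 <= Num.max `|a| `|b| by move=> a b; case: (max_props _ _ (normr_ge0 a) (normr_ge0 b)).
have hM : forall (Z : 'I_p.+3 -> 'I_n -> R[i]) i j, (Z = X \/ Z = Y) -> `|monom (Z i) (al j)| <= maxM X Y al.
  move=> Z i j hZ.
  have h1 : `|monom (Z i) (al j)| <= Num.max `|monom (X i) (al j)| `|monom (Y i) (al j)|.
    by case: hZ => ->; case: (max_props _ _ (normr_ge0 (monom (X i) (al j))) (normr_ge0 (monom (Y i) (al j)))).
  apply: (le_trans h1); rewrite /maxM.
  apply: le_trans (bigmax_ge _ _ i); last by move=> a; apply: bigmax_ge0 => b.
  by apply: (bigmax_ge (fun j => Num.max `|monom (X i) (al j)| `|monom (Y i) (al j)|) (fun _ => nn _ _)).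
have M0 : 0 <= maxM X Y al by apply: bigmax_ge0 => a; apply: bigmax_ge0 => b.
have hB : forall (Z : 'I_p.+3 -> 'I_n -> R[i]) i j k, (Z = X \/ Z = Y) ->
    `|monom (Z i) (al j) - monom (Z i) (al k)| <= maxB X Y al.
  move=> Z i j k hZ; rewrite /maxB.
  set F := fun i j k => Num.max (Num.max `|monom (X i) (al j) - monom (X i) (al k)|
                     `|monom (X j) (al i) - monom (X k) (al i)|)
            (Num.max `|monom (Y i) (al j) - monom (Y i) (al k)|
                     `|monom (Y j) (al i) - monom (Y k) (al i)|).
  have F0 : forall i j k, 0 <= F i j k.
    have mx0 : forall x y : R[i], 0 <= x -> 0 <= y -> 0 <= Num.max x y.
      by move=> x y hx hy; case: (max_props x y hx hy).
    by move=> a b c; rewrite /F; apply: mx0; apply: nn.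
  have h1 : `|monom (Z i) (al j) - monom (Z i) (al k)| <= F i j k.
    rewrite /F; case: (max_props _ _ (nn (monom (X i) (al j) - monom (X i) (al k)) (monom (X j) (al i) - monom (X k) (al i)))
                       (nn (monom (Y i) (al j) - monom (Y i) (al k)) (monom (Y j) (al i) - monom (Y k) (al i)))) => hx hy _.
    case: hZ => ->.
      apply: le_trans hx; by case: (max_props _ _ (normr_ge0 (monom (X i) (al j) - monom (X i) (al k))) (normr_ge0 (monom (X j) (al i) - monom (X k) (al i)))).
    apply: le_trans hy; by case: (max_props _ _ (normr_ge0 (monom (Y i) (al j) - monom (Y i) (al k))) (normr_ge0 (monom (Y j) (al i) - monom (Y k) (al i)))).
  apply: (le_trans h1).
  apply: le_trans (bigmax_ge (fun i => \big[Num.max/0]_(j < p.+3) \big[Num.max/0]_(k < p.+3) F i j k) _ i); last first.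
    by move=> a; apply: bigmax_ge0 => b; apply: bigmax_ge0 => c.
  apply: le_trans (bigmax_ge (fun j => \big[Num.max/0]_(k < p.+3) F i j k) _ j); last first.
    by move=> b; apply: bigmax_ge0 => c.
  exact: (bigmax_ge (fun k => F i j k) (fun k => F0 i j k)).
have he : forall i j, `|monom (X i) (al j) - monom (Y i) (al j)| <= maxEps X Y al.
  move=> i j; rewrite /maxEps.
  apply: le_trans (bigmax_ge (fun i => \big[Num.max/0]_(j < p.+3) `|monom (X i) (al j) - monom (Y i) (al j)|) _ i); last first.
    by move=> a; apply: bigmax_ge0 => b.
  exact: (bigmax_ge (fun j => `|monom (X i) (al j) - monom (Y i) (al j)|) (fun _ => normr_ge0 _)).
apply: det_diff => //.
- by move=> i j; rewrite mxE; apply: hM; left.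
- by move=> i j; rewrite mxE; apply: hM; right.
- by move=> i j k; rewrite !mxE; apply: hB; left.
- by move=> i j k; rewrite !mxE; apply: hB; right.
- by move=> i j; rewrite !mxE; apply: he.
Qed.
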